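(* Let $K$ be a number field, let $\alpha,\beta$ be multiplicatively independent positive rational numbers, and let $F\in K[[x^{\mathbb{R}}]]$ be a Hahn series satisfying nontrivial homogeneous equations $\sum_{i=0}^{d_1}P_i(x)F(x^{\alpha^i})=0$ and $\sum_{i=0}^{d_2}Q_i(x)F(x^{\beta^i})=0$ with $P_i,Q_i\in K[x]$, $P_{d_1}\ne0$, $Q_{d_2}\ne0$. Fix an integer $N>0$. Then there is a positive integer $l$ such that for all integers $m,n$ with $|m|<N$ and $|n|<N$, the Hahn series $F(x^l)$ is $\alpha^n\beta^m$-Mahler, i.e. there exist $e\ge0$ and $R_0,\dots,R_e\in K[x]$ not all zero with $\sum_{j=0}^e R_j(x)F\big(x^{l(\alpha^n\beta^m)^j}\big)=0$.
   Context: $K[[x^{\mathbb{R}}]]$ is the field of Hahn series $\sum_{i\in\mathbb{R}} f_ix^i$ ($f_i\in K$) with well-ordered support; $F(x^\gamma)=\sum_if_ix^{\gamma i}$ for $\gamma>0$. Positive reals $\alpha,\beta$ are multiplicatively independent if $\log\alpha/\log\beta\notin\mathbb{Q}$. *)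

(* Defs.v *)
From HB Require Import structures.
From mathcomp Require Import all_boot all_order all_algebra all_field.
From mathcomp Require Import all_classical all_reals all_analysis.
From mathcomp Require Import Rstruct.
Set Implicit Arguments. Unset Strict Implicit. Unset Printing Implicit Defensive.
Import Order.TTheory GRing.Theory Num.Theory.
Local Open Scope classical_set_scope.
Local Open Scope ring_scope.

Notation RR := Rdefinitions.R.

Definition well_ordered_set (S : set RR) : Prop :=
  forall A : set RR, A `<=` S -> A !=set0 ->
    exists a, A a /\ forall b, A b -> a <= b.

(* A Hahn series sum_i f_i x^i in K[[x^R]] is represented by its coefficient
   function f : R -> K; it is a Hahn series iff its support is well ordered. *)
Definition is_hahn (K : fieldType) (f : RR -> K) : Prop :=
  well_ordered_set [set i | f i != 0].

(* F(x^g) = sum_i f_i x^(g i): coefficient at j is f (j / g), for g > 0. *)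
Definition hsubst (K : fieldType) (g : RR) (f : RR -> K) : RR -> K :=
  fun j => f (j / g).

(* P(x) * F for a polynomial P = sum_k p_k x^k: coefficient at j is
   sum_k p_k f (j - k). *)
Definition hpolymul (K : fieldType) (P : {poly K}) (f : RR -> K) : RR -> K :=
  fun j => \sum_(k < size P) P`_k * f (j - k%:R).

Definition mahler_rel (K : fieldType) (g : RR) (e : nat) (Rs : nat -> {poly K})
  (f : RR -> K) : Prop :=
  forall t : RR, \sum_(j < e.+1) hpolymul (Rs j) (hsubst (g ^+ j) f) t = 0.

Definition is_mahler (K : fieldType) (g : RR) (f : RR -> K) : Prop :=
  exists (e : nat) (Rs : nat -> {poly K}),
    (exists j, (j <= e)%N /\ Rs j != 0) /\ mahler_rel g e Rs f.

Definition mult_indep (a b : RR) : Prop :=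
  ~ exists q : rat, ln a / ln b = ratr q.

(* Main.v *)
Require Import Defs.
From HB Require Import structures.
From mathcomp Require Import all_boot all_order all_algebra all_field.
From mathcomp Require Import all_classical all_reals all_analysis.
From mathcomp Require Import Rstruct.
From mathcomp Require Import all_fingroup.
From mathcomp Require Import ring lra zify.
Import Order.TTheory GRing.Theory Num.Theory.
Local Open Scope ring_scope.

Set Implicit Arguments. Unset Strict Implicit. Unset Printing Implicit Defensive.


Section Act.
Variable K : fieldType.
Implicit Types (p q : {poly K}) (f g : RR -> K) (h : RR).

Definition act h p f : RR -> K :=
  fun t => \sum_(k < size p) p`_k * f (t - k%:R * h).

Lemma act_widen n h p f t : (size p <= n)%N ->
  act h p f t = \sum_(k < n) p`_k * f (t - k%:R * h).
Proof.
move=> le; rewrite /act (big_ord_widen n (fun k => p`_k * f (t - k%:R * h)) le).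
rewrite big_mkcond /=; apply: eq_bigr => i _.
by case: ltnP => // /(nth_default 0) ->; rewrite mul0r.
Qed.

Lemma actD h p q f : act h (p + q) f = act h p f \+ act h q f.
Proof.
apply: boolp.funext => t /=.
set n := maxn (size p) (size q).
rewrite (@act_widen n) ?(leq_trans (size_polyD _ _)) //.
rewrite (@act_widen n _ p) ?leq_maxl // (@act_widen n _ q) ?leq_maxr //.
by rewrite -big_split /=; apply: eq_bigr => i _; rewrite coefD mulrDl.
Qed.

Lemma act0 h f : act h 0 f = (fun=> 0).
Proof. by apply: boolp.funext => t; rewrite /act size_poly0 big_ord0. Qed.

Lemma actC h c f : act h c%:P f = (fun t => c * f t).
Proof.
apply: boolp.funext => t; rewrite (@act_widen 1) ?size_polyC ?leq_b1 //.
by rewrite big_ord1 coefC /= mul0r subr0.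
Qed.

Lemma actCM h c p f : act h (c%:P * p) f = (fun t => c * act h p f t).
Proof.
apply: boolp.funext => t; rewrite (@act_widen (size p)).
  by rewrite /act mulr_sumr; apply: eq_bigr => i _; rewrite coefCM mulrA.
by rewrite (leq_trans (size_polyMleq _ _)) // size_polyC; case: (c != 0) => //=; case: size.
Qed.

Lemma actXM h p f : act h ('X * p) f = (fun t => act h p f (t - h)).
Proof.
apply: boolp.funext => t; rewrite (@act_widen (size p).+1).
  rewrite big_ord_recl coefXM /= mul0r add0r /act; apply: eq_bigr => i _.
  rewrite coefXM /=; congr (_ * f _).
  by rewrite /bump /= add1n -addn1 natrD mulrDl mul1r opprD addrA addrAC.
by rewrite (leq_trans (size_polyMleq _ _)) // size_polyX.
Qed.

Lemma act_addf h p f g : act h p (f + g) = act h p f + act h p g.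
Proof.
apply: boolp.funext => t; transitivity (act h p f t + act h p g t); last by [].
rewrite /act -big_split /=.
by apply: eq_bigr => i _; rewrite mulrDr.
Qed.

Lemma act_zerof h p : act h p 0 = 0.
Proof.
apply: boolp.funext => t; transitivity (0 : K); last by [].
by rewrite /act big1 // => i _; rewrite mulr0.
Qed.

Lemma act_sumf h p (I : Type) (r : seq I) (P : pred I) (F : I -> RR -> K) :
  act h p (\sum_(i <- r | P i) F i) = \sum_(i <- r | P i) act h p (F i).
Proof. exact: (big_morph _ (act_addf h p) (act_zerof h p)). Qed.

Lemma actDf h p q f : act h (p + q) f = act h p f + act h q f.
Proof. by rewrite actD. Qed.

Lemma act_sump h (I : Type) (r : seq I) (P : pred I) (F : I -> {poly K}) f :
  act h (\sum_(i <- r | P i) F i) f = \sum_(i <- r | P i) act h (F i) f.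
Proof.
apply: (big_morph (fun p => act h p f)); first by move=> x y; rewrite actDf.
by rewrite act0.
Qed.

Lemma act_shift h p f r :
  act h p (fun t => f (t - r)) = (fun t => act h p f (t - r)).
Proof.
apply: boolp.funext => t; rewrite /act; apply: eq_bigr => i _.
by rewrite addrAC.
Qed.

Lemma act_scalef h p c f :
  act h p (fun t => c * f t) = (fun t => c * act h p f t).
Proof.
apply: boolp.funext => t; rewrite /act mulr_sumr; apply: eq_bigr => i _.
by rewrite mulrCA.
Qed.

Lemma act_mul h p q f : act h (p * q) f = act h p (act h q f).
Proof.
elim/poly_ind: p => [|p c IH]; first by rewrite mul0r !act0.
by rewrite (mulrC p 'X) mulrDl -mulrA !actDf actCM actC !actXM IH.
Qed.

Lemma act1 h f : act h 1 f = f.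
Proof. by rewrite actC; apply: boolp.funext => t; rewrite mul1r. Qed.

Lemma actXnM h n p f :
  act h ('X^n * p) f = (fun t => act h p f (t - n%:R * h)).
Proof.
elim: n => [|n IH].
  by rewrite expr0 mul1r; apply: boolp.funext => t; rewrite mul0r subr0.
rewrite exprS -mulrA actXM IH; apply: boolp.funext => t.
by congr (act _ _ _); rewrite -natr1; ring.
Qed.

Lemma act_comp h n P f :
  act h (P \Po 'X^n) f = act (n%:R * h) P f.
Proof.
elim/poly_ind: P => [|P c IH]; first by rewrite comp_poly0 !act0.
rewrite comp_poly_MXaddC !actDf mulrC actXnM IH [P * _]mulrC actXM.
by rewrite !actC.
Qed.
End Act.

Section Subst.
Variable K : fieldType.
Implicit Types (p q : {poly K}) (f g : RR -> K) (h : RR).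

Lemma hsubst_act c h p f : c != 0 ->
  hsubst c (act h p f) = act (c * h) p (hsubst c f).
Proof.
move=> c0; apply: boolp.funext => t; rewrite /hsubst /act; apply: eq_bigr => i _.
congr (_ * f _); by field.
Qed.

Lemma hsubstM c d f : hsubst c (hsubst d f) = hsubst (c * d) f.
Proof. by apply: boolp.funext => t; rewrite /hsubst invfM mulrA. Qed.

Lemma hsubst_sum c n (F : nat -> RR -> K) :
  hsubst c (\sum_(i < n) F i) = \sum_(i < n) hsubst c (F i).
Proof.
by apply: boolp.funext => t; rewrite /hsubst !fct_sumE.
Qed.

Lemma hpolymul_act p f : hpolymul p f = act 1 p f.
Proof.
by apply: boolp.funext => t; rewrite /hpolymul /act; apply: eq_bigr => i _; rewrite mulr1.
Qed.
End Subst.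
Lemma widen_liftmax n (j : 'I_n) : widen_ord (leqnSn n) j = lift ord_max j.
Proof. by apply: val_inj; rewrite /= /bump leqNgt ltn_ord. Qed.

Lemma ring_dep (R : idomainType) (r : nat) : forall m (C : 'I_m -> 'I_r -> R),
  (r < m)%N -> exists mu : 'I_m -> R, (exists j, mu j != 0) /\
     forall k, \sum_j mu j * C j k = 0.
Proof.
elim: r => [|r IH] m C hm.
  exists (fun _ => 1); split; first by exists (Ordinal hm); exact: oner_neq0.
  by case.
case: m C hm => [|m'] C hm //.
have hm' : (r < m')%N by [].
case: (boolP [forall j, C j ord_max == 0]) => [/forallP allz | /forallPn [j0 /= nz]].
  have [mu [nz0 ker]] := IH m'.+1 (fun j k => C j (widen_ord (leqnSn r) k)) (ltnW hm).
  exists mu; split => // k.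
  have [klt|kge] := ltnP k r.
    have -> : k = widen_ord (leqnSn r) (Ordinal klt) by apply: val_inj.
    exact: ker.
  have -> : k = ord_max by apply: val_inj => /=; apply/eqP; rewrite eqn_leq kge -ltnS ltn_ord.
  by rewrite big1 // => j _; rewrite (eqP (allz j)) mulr0.
pose s := tperm j0 ord_max.
pose D j k := C (s j) k.
pose pv := D ord_max ord_max.
have pvnz : pv != 0 by rewrite /pv /D /s tpermR.
pose wj := widen_ord (leqnSn m').
pose wk := widen_ord (leqnSn r).
pose C' j k := D (wj j) (wk k) * pv - D (wj j) ord_max * D ord_max (wk k).
have [nu [[j1 nz1] ker]] := IH m' C' hm'.
pose S := \sum_j nu j * D (wj j) ord_max.
pose mut (i : 'I_m'.+1) := if unlift ord_max i is Some j then nu j * pv else - S.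
have mutw j : mut (wj j) = nu j * pv by rewrite /mut /wj widen_liftmax liftK.
have mutm : mut ord_max = - S by rewrite /mut unlift_none.
have key k : \sum_i mut i * D i k = 0.
  rewrite big_ord_recr /= mutm.
  under eq_bigr => j _ do rewrite -/(wj j) mutw.
  have [klt|kge] := ltnP k r.
    have -> : k = wk (Ordinal klt) by apply: val_inj.
    rewrite /S mulNr mulr_suml -sumrN -big_split /= -[RHS](ker (Ordinal klt)).
    apply: eq_bigr => j _; rewrite /C'; ring.
  have -> : k = ord_max by apply: val_inj => /=; apply/eqP; rewrite eqn_leq kge -ltnS ltn_ord.
  rewrite /S mulNr mulr_suml -sumrN -big_split /= big1 // => j _; rewrite /pv; ring.
exists (fun i => mut (s i)); split.
  by exists (s (wj j1)); rewrite tpermK mutw mulf_neq0.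
move=> k; rewrite (reindex_inj (@perm_inj _ s)) /=.
rewrite -[RHS](key k); apply: eq_bigr => i _; by rewrite tpermK.
Qed.

Section Span.
Variable K : fieldType.
Variable h : RR.
Implicit Types (p q : {poly K}) (f g v : RR -> K) (W : seq (RR -> K)).

Definition inspan W v := exists c : nat -> {poly K},
  v = \sum_(i < size W) act h (c i) (nth 0 W i).
Definition Sp W v := exists D : {poly K}, D != 0 /\ inspan W (act h D v).


Lemma act0p f : act h 0 f = 0.
Proof. by rewrite act0. Qed.

Lemma inspan0 W : inspan W 0.
Proof. by exists (fun=> 0); rewrite big1 // => i _; rewrite act0p. Qed.

Lemma inspanD W v1 v2 : inspan W v1 -> inspan W v2 -> inspan W (v1 + v2).
Proof.
move=> [c1 ->] [c2 ->]; exists (fun i => c1 i + c2 i).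
by rewrite -big_split /=; apply: eq_bigr => i _; rewrite actDf.
Qed.

Lemma inspan_act W p v : inspan W v -> inspan W (act h p v).
Proof.
move=> [c ->]; exists (fun i => p * c i).
rewrite act_sumf.
by apply: eq_bigr => i _; rewrite act_mul.
Qed.

Lemma Sp_nth W i : (i < size W)%N -> Sp W (nth 0 W i).
Proof.
move=> lt; exists 1; split; first exact: oner_neq0.
exists (fun j => if j == i then 1 else 0).
rewrite act1 (bigD1 (Ordinal lt)) //= eqxx act1 big1 ?addr0 // => j ji.
by rewrite ifN ?act0p // -(inj_eq val_inj).
Qed.

Lemma Sp0 W : Sp W 0.
Proof. exists 1; split; first exact: oner_neq0. rewrite act_zerof; exact: inspan0. Qed.

Lemma SpD W v1 v2 : Sp W v1 -> Sp W v2 -> Sp W (v1 + v2).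
Proof.
move=> [D1 [nz1 s1]] [D2 [nz2 s2]]; exists (D1 * D2); split; first exact: mulf_neq0.
rewrite act_addf {1}[D1 * D2]mulrC !act_mul.
by apply: inspanD; apply: inspan_act.
Qed.

Lemma Sp_act W p v : Sp W v -> Sp W (act h p v).
Proof.
move=> [D [nz s]]; exists D; split => //.
by rewrite -act_mul mulrC act_mul; apply: inspan_act.
Qed.

Lemma Sp_div W D v : D != 0 -> Sp W (act h D v) -> Sp W v.
Proof.
move=> nz [E [nzE s]]; exists (E * D); split; first exact: mulf_neq0.
by rewrite act_mul.
Qed.

Lemma Sp_sum W n (F : nat -> RR -> K) :
  (forall i, (i < n)%N -> Sp W (F i)) -> Sp W (\sum_(i < n) F i).
Proof.
elim: n => [|n IH] H; first by rewrite big_ord0; exact: Sp0.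
rewrite big_ord_recr /=; apply: SpD; last exact: H.
by apply: IH => i lt; apply: H; exact: ltnW.
Qed.

Lemma Sp_dim W (v : nat -> RR -> K) :
  (forall j, (j <= size W)%N -> Sp W (v j)) ->
  exists lam : nat -> {poly K}, (exists j, (j <= size W)%N /\ lam j != 0) /\
    \sum_(j < (size W).+1) act h (lam j) (v j) = 0.
Proof.
move=> H.
have H' : forall j, exists Dc : {poly K} * (nat -> {poly K}),
   (j <= size W)%N -> Dc.1 != 0 /\
     act h Dc.1 (v j) = \sum_(i < size W) act h (Dc.2 i) (nth 0 W i).
  move=> j; case: (leqP j (size W)) => [le|gt].
    by have [D [nz [c e]]] := H j le; exists (D, c).
  by exists (0, fun=> 0).
have [Dc HDc] := boolp.choice H'.
pose C (j : 'I_(size W).+1) (k : 'I_(size W)) := (Dc j).2 k.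
have [mu [[j1 nz1] ker]] := ring_dep C (ltnSn _).
exists (fun j => mu (inord j) * (Dc j).1); split.
  exists j1; split; first by rewrite -ltnS ltn_ord.
  rewrite inord_val mulf_neq0 //; by case: (HDc j1 (ltn_ord j1)).
under eq_bigr => j _ do rewrite inord_val act_mul (proj2 (HDc j (ltn_ord j))).
under eq_bigr => j _ do rewrite act_sumf.
rewrite exchange_big /= big1 // => k _.
under eq_bigr => j _ do rewrite -act_mul.
by rewrite -act_sump ker act0p.
Qed.
End Span.


Section Grow.
Variable K : fieldType.
Variable h : RR.
Variable W : seq (RR -> K).

Lemma comp_Xn_neq0 (p : {poly K}) n : (0 < n)%N -> p != 0 -> p \Po 'X^n != 0.
Proof.
move=> n0 nz; rewrite -lead_coef_eq0 lead_coef_comp ?size_polyXn ?ltnS //.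
by rewrite lead_coefXn expr1n mulr1 lead_coef_eq0.
Qed.

Lemma Sp_opp v : Sp h W v -> Sp h W (- v).
Proof.
move=> s; have -> : - v = act h (-1)%:P v.
  by rewrite actC; apply: boolp.funext => t; rewrite mulN1r.
exact: Sp_act.
Qed.

Lemma rel_solve n (Q : 'I_n -> {poly K}) (vs : 'I_n -> RR -> K) k0 :
  \sum_k act h (Q k) (vs k) = 0 -> Q k0 != 0 ->
  (forall k, k != k0 -> Q k != 0 -> Sp h W (vs k)) -> Sp h W (vs k0).
Proof.
move=> e nz H; apply: (Sp_div nz).
have -> : act h (Q k0) (vs k0) = - \sum_(k | k != k0) act h (Q k) (vs k).
  by rewrite (bigD1 k0) //= in e; apply/eqP; rewrite -addr_eq0 e.
apply: Sp_opp; apply: (big_ind (Sp h W)); first exact: Sp0.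
  by move=> x y; apply: SpD.
move=> k kn; case: (eqVneq (Q k) 0) => [->|nzk].
  by rewrite act0p; exact: Sp0.
by apply: Sp_act; apply: H.
Qed.

Lemma grow (d : nat) (P : nat -> {poly K}) (i0 : nat) (v : int -> RR -> K) (M : nat) :
  P d != 0 -> P i0 != 0 -> (i0 <= d)%N -> (forall k, (k < i0)%N -> P k = 0) ->
  (forall s : int, `|s| <= M%:Z -> exists n : nat, (0 < n)%N /\
      \sum_(k < d.+1) act h (P k \Po 'X^n) (v (s + (k : nat)%:Z)) = 0) ->
  (forall i : int, i0%:Z <= i -> i < d%:Z -> Sp h W (v i)) ->
  forall n : nat, (n <= M)%N -> forall i : int,
    i0%:Z - n%:Z <= i -> i < d%:Z + n%:Z -> Sp h W (v i).
Proof.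
move=> hd hi0 i0d low Rel base; elim=> [|n IH] nM i lo hi.
  by apply: base; lia.
have nM' : (n <= M)%N by lia.
case: (boolP ((i0%:Z - n%:Z <= i) && (i < d%:Z + n%:Z))) => [/andP[l1 l2]|out].
  exact: IH.
have out' : ~ ((i0%:Z - n%:Z <= i) /\ (i < d%:Z + n%:Z)).
  by move=> [l1 l2]; move: out; rewrite l1 l2.
have nzP k m : P k \Po 'X^m != 0 -> P k != 0.
  by move=> H; apply/eqP => pk; move: H; rewrite pk comp_poly0 eqxx.
have geP (k : nat) : P k != 0 -> (i0 <= k)%N.
  by move=> nzk; rewrite leqNgt; apply/negP => /low pk; rewrite pk eqxx in nzk.
have [e1|e2] : i = d%:Z + n%:Z \/ i = i0%:Z - n%:Z - 1 by lia.
  have [|m [m0 e]] := Rel n%:Z; first lia.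
  have -> : i = n%:Z + ((@ord_max d) : nat)%:Z by rewrite e1 /=; lia.
  apply: (rel_solve (Q := fun k : 'I_d.+1 => P k \Po 'X^m)
                    (vs := fun k : 'I_d.+1 => v (n%:Z + (k : nat)%:Z))) => //.
    exact: comp_Xn_neq0.
  move=> k kn nzk; have := geP _ (nzP _ _ nzk) => ge.
  have kd : (k < d)%N.
    have := ltn_ord k; rewrite ltnS leq_eqVlt => /orP [/eqP kd|//].
    by move: kn; rewrite (_ : k = ord_max) ?eqxx //; apply: val_inj; rewrite /= kd.
  apply: IH => //; lia.
have [|m [m0 e]] := Rel (- (n.+1)%:Z); first lia.
have i0lt : (i0 < d.+1)%N by [].
have -> : i = - (n.+1)%:Z + ((Ordinal i0lt) : nat)%:Z by rewrite e2 /=; lia.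
apply: (rel_solve (Q := fun k : 'I_d.+1 => P k \Po 'X^m)
                  (vs := fun k : 'I_d.+1 => v (- (n.+1)%:Z + (k : nat)%:Z))) => //.
  exact: comp_Xn_neq0.
move=> k kn nzk; have := geP _ (nzP _ _ nzk) => ge.
have kgt : (i0 < k)%N.
  rewrite ltn_neqAle ge andbT; apply: contra kn => /eqP ki.
  by apply/eqP; apply: val_inj.
have := ltn_ord k => kd.
apply: IH => //; lia.
Qed.
End Grow.


Ltac lia' := try (match goal with |- is_true (@Order.le _ _ ?x ?y) => change (x <= y) end);
  try (match goal with |- is_true (@Order.lt _ _ ?x ?y) => change (x < y) end); lia.

Section Main.
Variable K : fieldType.

Lemma hsubst_big c (I : Type) (r : seq I) (Pr : pred I) (G : I -> RR -> K) :
  hsubst c (\sum_(i <- r | Pr i) G i) = \sum_(i <- r | Pr i) hsubst c (G i).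
Proof.
apply: (big_morph (hsubst c)); last by [].
by move=> x y; apply: boolp.funext => t.
Qed.

Lemma rel_fun (g : RR) e Rs (f : RR -> K) : mahler_rel g e Rs f ->
  \sum_(k < e.+1) hpolymul (Rs k) (hsubst (g ^+ k) f) = 0.
Proof. by move=> H; apply: boolp.funext => t; rewrite fct_sumE; apply: H. Qed.

Lemma rel_sub (g : RR) (e : nat) Rs (f : RR -> K) c h (n : nat) :
  mahler_rel g e Rs f -> c != 0 -> n%:R * h = c ->
  \sum_(k < e.+1) act h (Rs k \Po 'X^n) (hsubst (c * g ^+ k) f) = 0.
Proof.
move=> /rel_fun E0 c0 hn.
transitivity (hsubst c (0 : RR -> K)); last by apply: boolp.funext.
rewrite -[X in _ = hsubst c X]E0 hsubst_big; apply: eq_bigr => k _.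
by rewrite hpolymul_act hsubst_act // mulr1 hsubstM act_comp hn.
Qed.

Lemma first_nz (P : nat -> {poly K}) d : P d != 0 ->
  exists i0, [/\ P i0 != 0, (i0 <= d)%N & forall k, (k < i0)%N -> P k = 0].
Proof.
move=> nz.
have ex : exists i, P i != 0 by exists d.
case: (ex_minnP ex) => i0 nz0 mn; exists i0; split => //; first exact: mn.
move=> k lt; apply/eqP; apply: contraTT lt => /mn; by rewrite -leqNgt.
Qed.

Lemma nle (i B : int) : `|i| <= B -> - B <= i /\ i <= B.
Proof. by rewrite ler_norml => /andP. Qed.
Lemma nle' (i B : int) : - B <= i -> i <= B -> `|i| <= B.
Proof. by rewrite ler_norml => -> ->. Qed.
Lemma nlt (i B : int) : `|i| < B -> - B < i /\ i < B.
Proof. by rewrite ltr_norml => /andP. Qed.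

Lemma main_abstract (a b : RR) (F : RR -> K) d1 (P : nat -> {poly K}) d2 (Q : nat -> {poly K})
  (Lf : nat -> nat) (N : nat) :
  0 < a -> 0 < b -> P d1 != 0 -> mahler_rel a d1 P F -> Q d2 != 0 -> mahler_rel b d2 Q F ->
  (forall M : nat, (0 < Lf M)%N /\ forall s j : int, `|s| <= M%:Z -> `|j| <= M%:Z ->
      exists n : nat, n%:R * ((Lf M)%:R : RR)^-1 = a ^ s * b ^ j) ->
  exists l : nat, (0 < l)%N /\ forall m n : int, `|m| < N%:Z -> `|n| < N%:Z ->
     is_mahler (a ^ n * b ^ m) (hsubst (l%:R : RR) F).
Proof.
move=> a0 b0 hP hPeq hQ hQeq hL.
have [i0 [hi0 i0d lowP]] := first_nz hP.
have [j0 [hj0 j0d lowQ]] := first_nz hQ.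
pose u (i j : int) := hsubst (a ^ i * b ^ j) F.
pose S := [seq (x%:Z, y%:Z) | x <- iota i0 (d1 - i0), y <- iota j0 (d2 - j0)].
pose W := [seq u p.1 p.2 | p <- S].
pose Dm := size W.
pose B := (N * Dm.+1)%N.
pose M := (B + d1 + d2).+1%N.
have hBM : (B + d1 + d2 < M)%N by [].
have eB : B = (N * Dm.+1)%N by [].
clearbody M B.
have [L0 hLM] := hL M.
pose h := ((Lf M)%:R : RR)^-1.
have Sp_in (x y : nat) : (i0 <= x < d1)%N -> (j0 <= y < d2)%N -> Sp h W (u x y).
  move=> hx hy.
  have mem : (x%:Z, y%:Z) \in S.
    by apply: (allpairs_f (fun x y : nat => (x%:Z, y%:Z))); rewrite mem_iota; lia.
  have := @Sp_nth K h W (index (x%:Z, y%:Z) S).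
  rewrite size_map index_mem mem => /(_ isT).
  by rewrite (nth_map (0,0)) ?index_mem // nth_index.
have ne0 (s j : int) : a ^ s * b ^ j != 0 by rewrite mulf_neq0 // expfz_neq0 // gt_eqF.
have expo (s j : int) : `|s| <= M%:Z -> `|j| <= M%:Z ->
    exists n : nat, (0 < n)%N /\ n%:R * h = a ^ s * b ^ j.
  move=> hs hj; have [n hn] := hLM s j hs hj; exists n; split => //.
  rewrite lt0n; apply/negP => /eqP n0; move: (ne0 s j); by rewrite -hn n0 mul0r eqxx.
have step1 (j : nat) : (j0 <= j < d2)%N -> forall i : int, `|i| <= B%:Z -> Sp h W (u i j).
  move=> hj i /nle [hi1 hi2].
  apply: (@grow K h W d1 P i0 (fun i => u i j) M hP hi0 i0d lowP _ _ (B + d1).+1); last first.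
  - lia'.
  - lia'.
  - lia'.
  - move=> i' l1 l2; have -> : i' = (absz i')%:Z by lia.
    apply: Sp_in; lia.
  move=> s hs; have [|n [n0 hn]] := expo s j hs; first by apply: nle'; lia.
  exists n; split => //.
  rewrite -[RHS](rel_sub hPeq (ne0 s j) hn); apply: eq_bigr => k _.
  rewrite /u expfzDr ?gt_eqF // -exprnP; congr (act _ _ (hsubst _ F)); ring.
have all (i j : int) : `|i| <= B%:Z -> `|j| <= B%:Z -> Sp h W (u i j).
  move=> hi /nle [hj1 hj2].
  apply: (@grow K h W d2 Q j0 (fun j => u i j) M hQ hj0 j0d lowQ _ _ (B + d2).+1); last first.
  - lia'.
  - lia'.
  - lia'.
  - move=> j' l1 l2; have -> : j' = (absz j')%:Z by lia.
    apply: step1 => //; lia.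
  move=> s hs; have [|n [n0 hn]] := expo i s _ hs.
    by move: hi => /nle [? ?]; apply: nle'; lia.
  exists n; split => //.
  rewrite -[RHS](rel_sub hQeq (ne0 i s) hn); apply: eq_bigr => k _.
  rewrite /u expfzDr ?gt_eqF // -exprnP; congr (act _ _ (hsubst _ F)); ring.
exists (Lf M); split => // m n /nlt [hm1 hm2] /nlt [hn1 hn2].
pose g := a ^ n * b ^ m.
pose v (j : nat) := hsubst (g ^+ j) F.
have hv : forall j, (j <= Dm)%N -> Sp h W (v j).
  move=> j hj; have -> : v j = u (n * j%:Z) (m * j%:Z).
    by rewrite /v /u /g exprMn -!exprz_exp.
  by apply: all; apply: nle'; rewrite eB; nia.
have [lam [[j1 [hj1 nz1]] rel]] := Sp_dim hv.
exists Dm, lam; split; first by exists j1.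
move=> t.
transitivity ((hsubst (Lf M)%:R (\sum_(j < Dm.+1) act h (lam j) (v j))) t); last by rewrite rel.
rewrite hsubst_big fct_sumE; apply: eq_bigr => j _.
have L0' : ((Lf M)%:R : RR) != 0 by rewrite pnatr_eq0 -lt0n.
rewrite hsubst_act // mulfV // -hpolymul_act /v !hsubstM mulrC.
by [].
Qed.
End Main.


Lemma intr_abs (z : int) : 0 <= z -> (z%:~R : RR) = (absz z)%:R.
Proof. by move=> hz; rewrite -{1}(gez0_abs hz) pmulrn. Qed.

Lemma ratr_pq (x : rat) : 0 < x ->
  (ratr x : RR) = (absz (numq x))%:R / (absz (denq x))%:R.
Proof.
move=> x0; rewrite /ratr (intr_abs (ltW (denq_gt0 x))) intr_abs //.
by rewrite ltW // numq_gt0.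
Qed.

Lemma powz_nat (x : RR) (z : int) : 0 <= z -> x ^ z = x ^+ (absz z).
Proof. by move=> hz; rewrite -{1}(gez0_abs hz). Qed.

Lemma powq (p q M : nat) (s : int) : (0 < p)%N -> (0 < q)%N -> `|s| <= M%:Z ->
  ((p * q) ^ M)%:R * ((p%:R / q%:R : RR) ^ s) =
  ((p ^ (absz (M%:Z + s)%R) * q ^ (absz (M%:Z - s)%R)))%:R.
Proof.
move=> p0 q0 /nle [s1 s2].
have pn : (p%:R : RR) != 0 by rewrite pnatr_eq0 -lt0n.
have qn : (q%:R : RR) != 0 by rewrite pnatr_eq0 -lt0n.
rewrite !(natrM, natrX) exprMn expfzMl exprz_inv.
rewrite -(powz_nat _ (_ : 0 <= M%:Z + s)); last lia.
rewrite -(powz_nat _ (_ : 0 <= M%:Z - s)); last lia.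
rewrite !expfzDr // !exprnP; ring.
Qed.

Unset Implicit Arguments. Set Strict Implicit. Set Printing Implicit Defensive.

Theorem mainTheorem12 (K : fieldExtType rat) (alpha beta : rat)
  (halpha : 0 < alpha) (hbeta : 0 < beta)
  (hindep : mult_indep (ratr alpha : RR) (ratr beta : RR))
  (F : RR -> K) (hF : is_hahn F)
  (d1 : nat) (P : nat -> {poly K}) (hP : P d1 != 0)
  (hPeq : mahler_rel (ratr alpha : RR) d1 P F)
  (d2 : nat) (Q : nat -> {poly K}) (hQ : Q d2 != 0)
  (hQeq : mahler_rel (ratr beta : RR) d2 Q F)
  (N : nat) (hN : (0 < N)%N) :
  exists l : nat, (0 < l)%N /\
    forall m n : int, `|m| < N%:Z -> `|n| < N%:Z ->
      is_mahler ((ratr alpha : RR) ^ n * (ratr beta : RR) ^ m)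
                (hsubst (l%:R : RR) F).
Proof.
pose p1 := absz (numq alpha). pose q1 := absz (denq alpha).
pose p2 := absz (numq beta). pose q2 := absz (denq beta).
have hp1 : (0 < p1)%N by rewrite absz_gt0 gt_eqF // numq_gt0.
have hp2 : (0 < p2)%N by rewrite absz_gt0 gt_eqF // numq_gt0.
have hq1 : (0 < q1)%N by rewrite absz_gt0 gt_eqF // denq_gt0.
have hq2 : (0 < q2)%N by rewrite absz_gt0 gt_eqF // denq_gt0.
apply: (@main_abstract _ (ratr alpha) (ratr beta) F d1 P d2 Q
          (fun M => ((p1 * q1) ^ M * (p2 * q2) ^ M)%N) N) => //.
- by rewrite ltr0q.
- by rewrite ltr0q.
move=> M; split; first by rewrite muln_gt0 !expn_gt0 !muln_gt0 hp1 hq1 hp2 hq2.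
move=> s j hs hj.
exists ((p1 ^ (absz (M%:Z + s)%R) * q1 ^ (absz (M%:Z - s)%R)) *
        (p2 ^ (absz (M%:Z + j)%R) * q2 ^ (absz (M%:Z - j)%R)))%N.
rewrite (ratr_pq halpha) (ratr_pq hbeta) natrM -(powq hp1 hq1 hs) -(powq hp2 hq2 hj).
have h1 : (((p1 * q1) ^ M)%:R : RR) != 0 by rewrite pnatr_eq0 -lt0n expn_gt0 muln_gt0 hp1 hq1.
have h2 : (((p2 * q2) ^ M)%:R : RR) != 0 by rewrite pnatr_eq0 -lt0n expn_gt0 muln_gt0 hp2 hq2.
rewrite natrM; field; by rewrite h1 h2.
Qed.
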